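(* Let $k\geq 2$ and $n\geq 3$ be integers. If $n\nrightarrow(3)_k^2$, then $2^n\nrightarrow(5)_k^3$.
   Context: For $m\in\mathbb N$ write $[m]=\{0,\dots,m-1\}$. For $n>r\geq1$, $k\geq2$, $n\geq s>r$, the relation $n\to(s)_k^r$ means that every colouring of the $r$-element subsets of $[n]$ with $k$ colours admits a subset of $[n]$ of size $s$ all of whose $r$-subsets receive the same colour; $n\nrightarrow(s)_k^r$ is its negation. *)

(* Defs.v *)
From mathcomp Require Import all_boot.
Set Implicit Arguments. Unset Strict Implicit. Unset Printing Implicit Defensive.

(* A k-colouring of the r-element subsets of [n] = 'I_n is represented by a
   function c : {set 'I_n} -> 'I_k; only its values on r-element sets matter. *)

Definition monochromatic (n k r : nat) (c : {set 'I_n} -> 'I_k) (S : {set 'I_n}) : Prop :=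
  exists col : 'I_k, forall A : {set 'I_n}, A \subset S -> #|A| = r -> c A = col.

Definition arrow (n s k r : nat) : Prop :=
  forall c : {set 'I_n} -> 'I_k,
    exists S : {set 'I_n}, #|S| = s /\ monochromatic r c S.

(* Main.v *)
From mathcomp Require Import zify.
From mathcomp Require Import all_boot.
Require Import Defs.
Set Implicit Arguments. Unset Strict Implicit. Unset Printing Implicit Defensive.

Fixpoint Df (f x y : nat) : nat :=
  match f with 0 => 0 | f'.+1 => if x == y then 0 else (Df f' x./2 y./2).+1 end.

Definition E j x y := x %/ 2 ^ j == y %/ 2 ^ j.

Lemma E_S j x y : E j.+1 x y = E j x./2 y./2.
Proof. by rewrite /E -!divn2 -!divnMA expnS mulnC. Qed.

Lemma Dspec f x y j : x < 2 ^ f -> y < 2 ^ f -> E j x y = (Df f x y <= j).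
Proof.
elim: f x y j => [|f IH] x y j /=.
  rewrite expn0 !ltnS !leqn0 => /eqP -> /eqP ->. by rewrite /E eqxx.
move=> hx hy. case: eqP => [->|ne]; first by rewrite /E eqxx.
case: j => [|j]; first by rewrite /E expn0 !divn1; apply/eqP.
rewrite E_S ltnS IH //.
  rewrite -divn2 ltn_divLR // -expnSr //.
rewrite -divn2 ltn_divLR // -expnSr //.
Qed.

Lemma leq_ext a b : (forall j, (a <= j) = (b <= j)) -> a = b.
Proof. move=> h; apply/eqP; rewrite eqn_leq -h leqnn h leqnn. done. Qed.

Section D.
Variable n : nat.
Definition D x y := Df n x y.

Lemma Dsym x y : x < 2 ^ n -> y < 2 ^ n -> D x y = D y x.
Proof. move=> hx hy; apply: leq_ext => j; rewrite -!Dspec // /E eq_sym. done. Qed.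

Lemma Dle x y : x < 2 ^ n -> y < 2 ^ n -> D x y <= n.
Proof. move=> hx hy; rewrite -Dspec // /E !divn_small //. Qed.

Lemma Dpos x y : x < 2 ^ n -> y < 2 ^ n -> x != y -> 0 < D x y.
Proof. move=> hx hy ne; rewrite lt0n -leqn0 -Dspec // /E expn0 !divn1 //. Qed.

Lemma Emid j x y z : x <= y <= z -> E j x z -> E j x y && E j y z.
Proof.
move=> /andP[h1 h2]; rewrite /E => /eqP e.
have a := leq_div2r (2 ^ j) h1. have b := leq_div2r (2 ^ j) h2.
apply/andP; split; apply/eqP; lia.
Qed.

Lemma Dmax x y z : x < y -> y < z -> z < 2 ^ n -> D x z = maxn (D x y) (D y z).
Proof.
move=> h1 h2 hz. have hy : y < 2 ^ n by lia. have hx : x < 2 ^ n by lia.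
apply: leq_ext => j; rewrite geq_max -!Dspec //.
apply/idP/idP.
  apply: Emid; lia.
by rewrite /E => /andP[/eqP -> /eqP ->].
Qed.

Lemma Dneq x y z : x < y -> y < z -> z < 2 ^ n -> D x y != D y z.
Proof.
move=> h1 h2 hz. have hy : y < 2 ^ n by lia. have hx : x < 2 ^ n by lia.
apply/eqP => e.
have p := Dpos hx hy (negbT (ltn_eqF h1)). 
move: p e; rewrite /D; case Exy: (Df n x y) => [|d] // _ e.
have E1 : E d.+1 x y by rewrite (Dspec _ hx hy) // Exy.
have E2 : E d.+1 y z by rewrite (Dspec _ hy hz) // -e.
have N1 : ~~ E d x y by rewrite (Dspec _ hx hy) // Exy ltnn.
have N2 : ~~ E d y z by rewrite (Dspec _ hy hz) // -e ltnn.
move: E1 E2 N1 N2; rewrite /E expnSr !divnMA => /eqP e1 /eqP e2 n1 n2.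
have a := leq_div2r (2 ^ d) (ltnW h1). have b := leq_div2r (2 ^ d) (ltnW h2).
move: (x %/ 2 ^ d) (y %/ 2 ^ d) (z %/ 2 ^ d) e1 e2 n1 n2 a b => X Y Z e1 e2 n1 n2 a b.
have : X < Y by rewrite ltn_neqAle n1 a.
have : Y < Z by rewrite ltn_neqAle n2 b.
lia.
Qed.
End D.
Definition Tset n (A : {set 'I_(2 ^ n)}) : {set 'I_n} :=
  [set i : 'I_n | [exists a in A, exists b in A, (a != b) && (nat_of_ord i == (D n a b).-1)]].

Lemma Tset3 n (x y z : 'I_(2 ^ n)) : nat_of_ord x < y -> nat_of_ord y < z ->
  Tset [set x; y; z] = [set i : 'I_n | (nat_of_ord i == (D n x y).-1) || (nat_of_ord i == (D n y z).-1)].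
Proof.
move=> hxy hyz.
have hx := ltn_ord x. have hy := ltn_ord y. have hz := ltn_ord z.
have Mx := Dmax hxy hyz hz.
have Sxy := Dsym hx hy. have Syz := Dsym hy hz. have Sxz := Dsym hx hz.
apply/setP=> i; rewrite !inE; apply/idP/idP.
  move=> /exists_inP[a ha /exists_inP[b hb /andP[ab /eqP ->]]].
  move: ha hb; rewrite !inE => /orP[/orP[]|]/eqP Ea /orP[/orP[]|]/eqP Eb; subst a b;
    rewrite ?eqxx // in ab *; try lia.
case/orP=> /eqP h; apply/exists_inP.
  exists x; rewrite ?inE ?eqxx //; apply/exists_inP; exists y; rewrite ?inE ?eqxx ?orbT //.
  by rewrite h eqxx andbT -val_eqE /= ltn_eqF.
exists y; rewrite ?inE ?eqxx ?orbT //; apply/exists_inP; exists z; rewrite ?inE ?eqxx ?orbT //.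
by rewrite h eqxx andbT -val_eqE /= ltn_eqF.
Qed.
Lemma set2C (T : finType) (p q : T) : [set p; q] = [set q; p].
Proof. by apply/setP=> i; rewrite !inE orbC. Qed.

Lemma card3 (T : finType) (a b e : T) : (a == b) = false -> (a == e) = false -> (b == e) = false ->
  #|[set a; b; e]| = 3.
Proof.
move=> h1 h2 h3.
have -> : [set a; b; e] = a |: [set b; e] by apply/setP=> i; rewrite !inE orbA.
by rewrite cardsU1 cards2 !inE h1 h2 h3.
Qed.

Lemma neq_ord N (a b : 'I_N) : nat_of_ord a < b -> (a == b) = false.
Proof. by move=> h; rewrite -val_eqE /= ltn_eqF. Qed.

Lemma tri4 n k (c : {set 'I_n} -> 'I_k) (col : 'I_k) (S : {set 'I_(2 ^ n)})
  (Hcol : forall A : {set 'I_(2 ^ n)}, A \subset S -> #|A| = 3 -> c (Tset A) = col)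
  (x y z w : 'I_(2 ^ n)) : x \in S -> y \in S -> z \in S -> w \in S ->
  nat_of_ord x < y -> nat_of_ord y < z -> nat_of_ord z < w ->
  D n x y != D n z w ->
  (D n y z < D n z w) || (D n y z < D n x y) ->
  exists S' : {set 'I_n}, #|S'| = 3 /\ monochromatic 2 c S'.
Proof.
move=> xS yS zS wS xy yz zw d13 hc.
have pc : forall a b e : 'I_(2 ^ n), a \in S -> b \in S -> e \in S ->
    nat_of_ord a < b -> nat_of_ord b < e ->
    c [set i : 'I_n | (nat_of_ord i == (D n a b).-1) || (nat_of_ord i == (D n b e).-1)] = col.
  move=> a b e aS bS eS ab be; rewrite -Tset3 //; apply: Hcol.
    by apply/subsetP=> t; rewrite !inE => /orP[/orP[]|]/eqP->.
  by apply: card3; [exact: neq_ord ab | exact: neq_ord (ltn_trans ab be) | exact: neq_ord be].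
have hx := ltn_ord x. have hy := ltn_ord y. have hz := ltn_ord z. have hw := ltn_ord w.
have n12 := Dneq xy yz hz. have n23 := Dneq yz zw hw.
have Mxz := Dmax xy yz hz. have Myw := Dmax yz zw hw.
have P1 := Dpos hx hy (negbT (neq_ord xy)).
have P2 := Dpos hy hz (negbT (neq_ord yz)).
have P3 := Dpos hz hw (negbT (neq_ord zw)).
have L1 := Dle hx hy. have L2 := Dle hy hz. have L3 := Dle hz hw.
have q1 : (D n x y).-1 < n by lia.
have q2 : (D n y z).-1 < n by lia.
have q3 : (D n z w).-1 < n by lia.
pose p1 := Ordinal q1. pose p2 := Ordinal q2. pose p3 := Ordinal q3.
have e12 : (p1 == p2) = false by rewrite -val_eqE /=; lia.
have e13 : (p1 == p3) = false by rewrite -val_eqE /=; lia.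
have e23 : (p2 == p3) = false by rewrite -val_eqE /=; lia.
have setE : forall p q : 'I_n, [set p; q] = [set i : 'I_n | (nat_of_ord i == p) || (nat_of_ord i == q)].
  by move=> p q; apply/setP=> i; rewrite !inE -!val_eqE.
have c12 : c [set p1; p2] = col by rewrite setE /=; apply: pc.
have c23 : c [set p2; p3] = col by rewrite setE /=; apply: pc.
have c13 : c [set p1; p3] = col.
  rewrite setE /=. case/orP: hc => hc.
    have -> : (D n z w) = D n y w by rewrite (Dmax yz zw hw); lia.
    by apply: pc => //; apply: ltn_trans zw.
  have -> : (D n x y) = D n x z by rewrite (Dmax xy yz hz); lia.
  by apply: pc => //; apply: ltn_trans yz.
exists [set p1; p2; p3]; split.
  by apply: card3.
exists col => A HA HA2.
have /cards2P[u [v [uv EA]]] : #|A| == 2 by apply/eqP.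
subst A.
have hu : u \in [set p1; p2; p3] by apply: (subsetP HA); rewrite !inE eqxx.
have hv : v \in [set p1; p2; p3] by apply: (subsetP HA); rewrite !inE eqxx orbT.
move: hu hv uv; rewrite !inE => /orP[/orP[]|]/eqP -> /orP[/orP[]|]/eqP -> uv;
  rewrite ?eqxx // in uv. all: try done. all: by rewrite set2C.
Qed.

Theorem mainTheorem8 (k n : nat) (hk : 2 <= k) (hn : 3 <= n) :
  ~ arrow n 3 k 2 -> ~ arrow (2 ^ n) 5 k 3.
Proof.
move=> Hnot Harr; apply: Hnot => c.
have [S [HS [col Hcol]]] := Harr (fun A => c (Tset A)).
have sz : size (enum S) = 5 by rewrite -cardE.
have srt : sorted (fun a b : 'I_(2 ^ n) => nat_of_ord a < b) (enum S).
  have h : sorted (fun a b : 'I_(2 ^ n) => nat_of_ord a < b) (Finite.enum 'I_(2 ^ n)).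
    have h0 : sorted ltn (map val (enum 'I_(2 ^ n))) by rewrite val_enum_ord iota_ltn_sorted.
    by rewrite sorted_map enumT in h0.
  have tr : transitive (fun a b : 'I_(2 ^ n) => nat_of_ord a < b) by move=> y x z; apply: ltn_trans.
  exact: (sorted_filter tr _ h).
have mem : forall t, t \in enum S -> t \in S by move=> t; rewrite mem_enum.
move: sz srt mem; case: (enum S) => [|a [|b [|c' [|d [|e [|f l]]]]]] //= _.
move=> /and5P[ab bc cd de _] hm.
have aS : a \in S by apply: hm; rewrite !inE eqxx.
have bS : b \in S by apply: hm; rewrite !inE eqxx !orbT.
have cS : c' \in S by apply: hm; rewrite !inE eqxx !orbT.
have dS : d \in S by apply: hm; rewrite !inE eqxx !orbT.
have eS : e \in S by apply: hm; rewrite !inE eqxx !orbT.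
have Hc : forall A : {set 'I_(2 ^ n)}, A \subset S -> #|A| = 3 -> c (Tset A) = col.
  by move=> A h1 h2; apply: Hcol.
have hc := ltn_ord c'. have hd := ltn_ord d. have he := ltn_ord e.
have n1 := Dneq ab bc hc. have n2 := Dneq bc cd hd. have n3 := Dneq cd de he.
have F1 := Dneq ab (ltn_trans bc cd) hd.
have F2 := Dneq (ltn_trans bc cd) de he.
have M1 := Dmax bc cd hd.
case: (boolP ((D n a b != D n c' d) && ((D n b c' < D n c' d) || (D n b c' < D n a b)))).
  by case/andP=> h1 h2; apply: (tri4 Hc aS bS cS dS ab bc cd).
move=> H.
apply: (tri4 Hc bS cS dS eS bc cd de).
  move: H F1 F2 n1 n2 n3; rewrite M1; lia.
move: H F1 F2 n1 n2 n3; rewrite M1; lia.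
Qed.
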